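(* Let $K$ be a finite field of characteristic $p$ and order $q$, let $s$ be a positive integer with $\gcd(s,q-1)=1$, and let $t_1,t_2,t_3\in K^\times$. Then: (i) $\sum_{u\in K^\times}W_u=q$; (ii) $\sum_{u\in K^\times}W_{t_1u}W_{t_2u}$ equals $q^2$ if $t_1=t_2$ and $0$ if $t_1\ne t_2$; (iii) $\sum_{u\in K^\times}W_{t_1u}W_{t_2u}W_{t_3u}=q^2V^{[t_1,t_2]}_{1/t_3}$; (iv) $\sum_{u\in K^\times}W_u^4=q^2\sum_{u\in K^\times}\big(V^{[1,1]}_u\big)^2$.
   Context: $\zeta=\exp(2\pi i/p)$, $\psi(x)=\zeta^{\mathrm{Tr}(x)}$ with $\mathrm{Tr}$ the absolute trace of $K$ to $\mathbb{F}_p$; $W_u=\sum_{x\in K}\psi(x^s-ux)$. Let $1/s$ denote the inverse of $s$ modulo $q-1$. For $t=(t_1,t_2)\in(K^\times)^2$ and $a,b\in K$, $Q^t_{a,b}$ is the number of $(v_1,v_2)\in K^2$ with $t_1v_1+t_2v_2=a$ and $(v_1^s+v_2^s)^{1/s}=b$, and for $u\in K^\times$, $V^{[t_1,t_2]}_u=Q^{(t_1,t_2)}_{1,u}-Q^{(t_1,t_2)}_{1,0}$. *)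

(* Defs.v *)
From HB Require Import structures.
From mathcomp Require Import all_boot all_order all_algebra all_field.
Set Implicit Arguments. Unset Strict Implicit. Unset Printing Implicit Defensive.
Import Order.TTheory GRing.Theory Num.Theory.
Local Open Scope ring_scope.

(* zeta = exp(2 pi i / p) in algC: p.-root(-1) is exp(i pi / p)
   (the root with minimal nonnegative argument), so its square is exp(2 pi i/p). *)
Definition zeta (p : nat) : algC := (p.-root (-1)) ^+ 2.

(* absolute trace K -> F_p (as an element of K, lying in the prime field),
   where #|K| = p ^ n with n = logn p #|K| *)
Definition absTr (K : finFieldType) (p : nat) (x : K) : K :=
  \sum_(i < logn p #|K|) x ^+ (p ^ i).

(* psi(x) = zeta^{Tr(x)}, Tr(x) identified with the integer k < p with k%:R = Tr(x) *)
Definition psi (K : finFieldType) (p : nat) (x : K) : algC :=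
  \sum_(k < p | absTr p x == k%:R) zeta p ^+ k.

Definition W (K : finFieldType) (p s : nat) (u : K) : algC :=
  \sum_(x : K) psi p (x ^+ s - u * x).

(* Q^t_{a,b}, with si a (positive) representative of 1/s modulo q-1 *)
Definition Q (K : finFieldType) (s si : nat) (t1 t2 a b : K) : nat :=
  #|[set v : K * K | (t1 * v.1 + t2 * v.2 == a)
                      && ((v.1 ^+ s + v.2 ^+ s) ^+ si == b)]|.

Definition V (K : finFieldType) (s si : nat) (t1 t2 u : K) : algC :=
  (Q s si t1 t2 1 u)%:R - (Q s si t1 t2 1 0)%:R.

(* Main.v *)
Require Import Defs.
From HB Require Import structures.
From mathcomp Require Import all_boot all_order all_algebra all_field.
From mathcomp Require Import ring zify.
Set Implicit Arguments. Unset Strict Implicit. Unset Printing Implicit Defensive.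
Import Order.TTheory GRing.Theory Num.Theory.
Local Open Scope ring_scope.

Lemma zeta_neq1 (p : nat) : prime p -> zeta p != 1.
Proof.
move=> pr_p; have p_gt1 := prime_gt1 pr_p; have p_gt0 := prime_gt0 pr_p.
rewrite /zeta; set r := p.-root (-1).
have rp : r ^+ p = -1 by rewrite /r rootCK.
have N1neq1 : (-1 : algC) != 1.
  by rewrite eq_sym -addr_eq0 -(natrD _ 1 1) pnatr_eq0.
apply/eqP => r21.
have : (r - 1) * (r + 1) = 0 by rewrite -subr_sqr r21 expr1n subrr.
move/eqP; rewrite mulf_eq0 subr_eq0 addr_eq0 => /orP[/eqP r1|/eqP rN1].
  by move: rp; rewrite r1 expr1n => /eqP; rewrite eq_sym (negbTE N1neq1).
have [p2|podd] := even_prime pr_p.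
  by move: rp; rewrite rN1 p2 sqrrN expr1n => /eqP; rewrite eq_sym (negbTE N1neq1).
have [w pw] := C_prim_root_exists p_gt0.
have wp : w ^+ p = 1 := prim_expr_order pw.
have yp : (- w) ^+ p = -1 by rewrite exprNn -signr_odd podd expr1 wp mulr1.
have ycp : (- w^*) ^+ p = -1.
  by rewrite -rmorphN -rmorphXn yp rmorphN rmorph1.
have ReN : forall z : algC, 'Re (- z) = - 'Re z by move=> z; rewrite raddfN.
have ImN : forall z : algC, 'Im (- z) = - 'Im z by move=> z; rewrite raddfN.
have Re1 : 'Re (1 : algC) = 1 by apply/Creal_ReP; rewrite rpred1.
have Rew : 1 <= 'Re w.
  have [Im0|Im0] := boolP (0 <= 'Im (- w)).
    have := rootC_Re_max p_gt0 yp Im0; rewrite -/r rN1.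
    by rewrite !ReN Re1 lerN2.
  have Im0' : 0 <= 'Im (- w^*).
    rewrite ImN Im_conj opprK.
    move: Im0; rewrite ImN oppr_ge0.
    case/orP: (real_leVge (Creal_Im w) (real0 _)) => h.
      by rewrite h.
    by [].
  have := rootC_Re_max p_gt0 ycp Im0'; rewrite -/r rN1.
  by rewrite !ReN Re_conj Re1 lerN2.
have nw : `|w| = 1.
  apply/eqP; rewrite -(@pexpr_eq1 _ _ p) // -normrX wp normr1 //.
have w1 : w = 1.
  have [le_Re eq_Re] := leif_Re_Creal w; rewrite nw in le_Re eq_Re.
  have : 'Re w == 1 by rewrite eq_le Rew le_Re.
  rewrite eq_Re => w0.
  by apply/eqP; rewrite -(geC0_unit_exp (p.-1)) // prednK // wp.
by move: (prim_order_dvd pw 1); rewrite w1 expr1 eqxx dvdn1 => /eqP p1; rewrite p1 in p_gt1.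
Qed.

Lemma zeta_prim (p : nat) : prime p -> p.-primitive_root (zeta p).
Proof.
move=> pr_p; have p_gt0 := prime_gt0 pr_p.
have zp : zeta p ^+ p = 1.
  by rewrite /zeta -exprM mulnC exprM rootCK // sqrrN expr1n.
have [m pm mp] := prim_order_exists p_gt0 zp.
have := pr_p; case/primeP => _ H.
case/orP: (H m mp) => /eqP Hm; last by rewrite Hm in pm.
have := prim_expr_order pm; rewrite Hm expr1 => z1.
by move: (zeta_neq1 pr_p); rewrite z1 eqxx.
Qed.

Section Field.
Variable K : finFieldType.
Variable p : nat.
Hypothesis pK : p \in [pchar K].

Let pr_p : prime p := pcharf_prime pK.
Let p_gt1 : (1 < p)%N := prime_gt1 pr_p.
Let n := logn p #|K|.

Lemma cardK : #|K| = (p ^ n)%N.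
Proof. exact: (card_pprimeChar pK). Qed.

Lemma n_gt0 : (0 < n)%N.
Proof.
have := finNzRing_gt1 K; rewrite cardK; case: (n) => //.
Qed.

Lemma frobX i (x y : K) : (x + y) ^+ (p ^ i) = x ^+ (p ^ i) + y ^+ (p ^ i).
Proof.
elim: i => [|i IH]; first by rewrite !expn0 !expr1.
rewrite expnSr !exprM IH.
by have := pFrobenius_autD_comm pK (mulrC (x ^+ (p ^ i)) (y ^+ (p ^ i))); rewrite !pFrobenius_autE.
Qed.

Lemma absTrD (x y : K) : absTr p (x + y) = absTr p x + absTr p y.
Proof. by rewrite /absTr -big_split; apply: eq_bigr => i _; rewrite frobX. Qed.

Lemma absTr0 : absTr p (0 : K) = 0.
Proof. by rewrite /absTr big1 // => i _; rewrite expr0n expn_eq0 eqn0Ngt prime_gt0. Qed.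

Lemma absTr_frob (x : K) : absTr p x ^+ p = absTr p x.
Proof.
rewrite -pFrobenius_autE rmorph_sum /=.
have := n_gt0; rewrite /absTr -/n; case En : n => [|m] // _.
rewrite big_ord_recr big_ord_recl /= expn0 expr1.
rewrite pFrobenius_autE -exprM -expnSr -En -cardK expf_card addrC; congr (_ + _).
by apply: eq_bigr => i _; rewrite pFrobenius_autE -exprM -expnSr.
Qed.

Lemma natK_inj (i j : nat) : (i < p)%N -> (j < p)%N -> (i%:R == j%:R :> K) = (i == j).
Proof.
move=> ip jp; apply/idP/idP => [|/eqP -> //].
wlog le_ij : i j ip jp / (i <= j)%N.
  move=> H; case/orP: (leq_total i j) => h; first exact: H.
  by rewrite eq_sym => /(H _ _ jp ip h); rewrite eq_sym.
rewrite eq_sym -subr_eq0 -natrB // -(dvdn_pcharf pK) => hd.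
case: (posnP (j - i)) => [h0|hpos]; first by apply/eqP; lia.
have := dvdn_leq hpos hd; lia.
Qed.

Lemma primeField (y : K) : y ^+ p = y -> exists2 k : nat, (k < p)%N & y = k%:R.
Proof.
move=> yp.
set rs := [seq (k%:R : K) | k <- iota 0 p].
have urs : uniq rs.
  rewrite map_inj_in_uniq ?iota_uniq // => i j; rewrite !mem_iota /= !add0n => ip jp.
  by move/eqP; rewrite natK_inj // => /eqP.
have [/mapP [k] |ny] := boolP (y \in rs).
  by rewrite mem_iota add0n /= => kp ->; exists k.
pose P : {poly K} := 'X^p - 'X.
have sP : size P = p.+1.
  by rewrite /P size_polyDl ?size_polyXn // size_polyN size_polyX ltnS.
have P0 : P != 0 by rewrite -size_poly_gt0 sP.
have := @max_poly_roots _ P (y :: rs) P0.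
rewrite /= urs ny sP size_map size_iota ltnn => H.
suff : false by [].
apply: H; apply/andP; split.
  by rewrite /root /P !hornerE yp subrr.
apply/allP => z /mapP [k _ ->].
by rewrite /root /P !hornerE -pFrobenius_autE pFrobenius_aut_nat subrr.
all: done.
Qed.

Let zp := zeta_prim pr_p.

Lemma psiE (x : K) (k : nat) : (k < p)%N -> absTr p x = k%:R -> psi p x = zeta p ^+ k.
Proof.
move=> kp hx; rewrite /psi (bigD1 (Ordinal kp)) /=; last by rewrite hx.
rewrite big1 ?addr0 //.
move=> j /andP [hj nj]; exfalso; move: hj; rewrite hx natK_inj //.
by move: nj; rewrite eq_sym -val_eqE /= => /negbTE ->.
Qed.

Lemma psi_add (x y : K) : psi p (x + y) = psi p x * psi p y.
Proof.
have [kx kxp hx] := primeField (absTr_frob x).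
have [ky kyp hy] := primeField (absTr_frob y).
rewrite (psiE kxp hx) (psiE kyp hy) -exprD -(prim_expr_mod zp).
apply: psiE; first by rewrite ltn_mod prime_gt0.
by rewrite absTrD hx hy -natrD (GRing.natr_mod_pchar pK).
Qed.

Lemma psi0 : psi p (0 : K) = 1.
Proof. by rewrite (@psiE 0 0) ?prime_gt0 ?absTr0. Qed.

Lemma absTr_nonzero : exists c : K, absTr p c != 0.
Proof.
apply/existsP; apply: contraT; rewrite negb_exists => /forallP H.
pose P : {poly K} := \sum_(i < n) 'X^(p ^ i).
have hP x : P.[x] = absTr p x.
  by rewrite /P horner_sum; apply: eq_bigr => i _; rewrite hornerXn.
have P1 : P`_1 = 1.
  rewrite /P coef_sum (bigD1 (Ordinal n_gt0)) //= expn0 coefXn eqxx big1 ?addr0 //.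
  move=> i ni; rewrite coefXn; case: eqP => // h; exfalso; move: ni.
  have : (p ^ i == 1)%N by rewrite -h.
  rewrite -(expn0 p) eqn_exp2l // => /eqP i0.
  by rewrite -val_eqE /= i0.
have P0 : P != 0 by apply/eqP => P0; move: P1; rewrite P0 coef0 => /eqP; rewrite eq_sym oner_eq0.
have := @max_poly_roots _ P (enum K) P0.
rewrite enum_uniq -cardE.
have -> : all (root P) (enum K).
  by apply/allP => x _; rewrite /root hP; move: (H x); rewrite negbK.
move=> /(_ isT isT) hlt.
have : (size P <= (p ^ n.-1).+1)%N.
  apply: leq_trans (size_sum _ _ _) _.
  apply/bigmax_leqP => i _; rewrite size_polyXn ltnS leq_pexp2l ?prime_gt0 //.
  by rewrite -ltnS prednK ?n_gt0.
have : (p ^ n.-1 < p ^ n)%N by rewrite ltn_exp2l // prednK ?n_gt0 // ltnSn.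
rewrite -cardK => h1 h2; move: (leq_trans hlt h2); rewrite ltnS leqNgt h1.
by [].
Qed.

Lemma psi_nontriv : exists c : K, psi p c != 1.
Proof.
have [c hc] := absTr_nonzero; exists c.
have [k kp hk] := primeField (absTr_frob c).
rewrite (psiE kp hk) -(prim_order_dvd zp).
by apply: contra hc => hd; rewrite hk -(dvdn_pcharf pK).
Qed.

Lemma sum_psi : \sum_(x : K) psi p x = 0.
Proof.
have [c hc] := psi_nontriv.
have E : \sum_(x : K) psi p x = psi p c * \sum_(x : K) psi p x.
  rewrite mulr_sumr (reindex_inj (addIr c)) /=.
  by apply: eq_bigr => x _; rewrite psi_add mulrC.
apply/eqP; move: E => /eqP; rewrite -subr_eq0 -{1}[\sum_x _]mul1r -mulrBl mulf_eq0.
by rewrite subr_eq0 eq_sym (negbTE hc).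
Qed.

Lemma sum_psi_mul (a : K) : \sum_(x : K) psi p (a * x) = if a == 0 then (#|K|)%:R else 0.
Proof.
have [->|a0] := eqVneq a 0.
  by under eq_bigr => x _ do rewrite mul0r psi0; rewrite sumr_const.
by rewrite -[RHS]sum_psi [RHS](reindex_inj (mulfI a0)).
Qed.

Lemma sum_psi_nz (a : K) :
  \sum_(u : K | u != 0) psi p (u * a) = (if a == 0 then (#|K|)%:R else 0) - 1.
Proof.
rewrite -(sum_psi_mul a) [in RHS](bigD1 0) //= mulr0 psi0 (addrC 1) addrK.
by apply: eq_bigr => u _; rewrite mulrC.
Qed.

Lemma orth (T : finType) (f : T -> algC) (g : T -> K) :
  \sum_(u : K | u != 0) \sum_(x : T) f x * psi p (u * g x)
  = (#|K|)%:R * \sum_(x : T | g x == 0) f x - \sum_(x : T) f x.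
Proof.
rewrite exchange_big /=.
under eq_bigr => x _ do rewrite -mulr_sumr sum_psi_nz mulrBr mulr1.
rewrite sumrB mulr_sumr big_mkcond /=; congr (_ - _).
rewrite [RHS]big_mkcond; apply: eq_bigr => x _; case: eqP => _; by rewrite ?mulr0 // mulrC.
Qed.

Variables s si : nat.
Hypothesis s_gt0 : (0 < s)%N.
Hypothesis si_gt0 : (0 < si)%N.
Hypothesis ssi : (s * si = 1 %[mod #|K|.-1])%N.

Lemma expK1 (x : K) : x != 0 -> x ^+ #|K|.-1 = 1.
Proof.
move=> x0; apply: (mulIf x0); rewrite mul1r -exprSr prednK ?expf_card //.
exact: ltnW (finNzRing_gt1 K).
Qed.

Lemma powss (x : K) : x ^+ (s * si) = x.
Proof.
have [->|x0] := eqVneq x 0; first by rewrite expr0n muln_eq0 !eqn0Ngt s_gt0 si_gt0.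
by rewrite -(expr_mod _ (expK1 x0)) ssi (expr_mod _ (expK1 x0)) expr1.
Qed.

Lemma powK (x : K) : (x ^+ s) ^+ si = x.
Proof. by rewrite -exprM powss. Qed.

Lemma powK' (x : K) : (x ^+ si) ^+ s = x.
Proof. by rewrite -exprM mulnC powss. Qed.

Lemma pow_inj : injective (fun x : K => x ^+ s).
Proof. exact: (@can_inj _ _ _ (fun x : K => x ^+ si) powK). Qed.

Lemma powi_inj : injective (fun x : K => x ^+ si).
Proof. exact: (@can_inj _ _ _ (fun x : K => x ^+ s) powK'). Qed.

Lemma neg1s : (-1 : K) ^+ s = -1.
Proof.
have [od|ev] := boolP (odd s); first by rewrite -signr_odd od expr1.
rewrite -signr_odd (negbTE ev) expr0.
have := powK (-1); rewrite -signr_odd (negbTE ev) expr0 expr1n => <-.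
done.
Qed.

Lemma powN (x : K) : (- x) ^+ s = - x ^+ s.
Proof. by rewrite -mulN1r exprMn neg1s mulN1r. Qed.

Lemma sum_psi_pow (c : K) :
  \sum_(x : K) psi p (c * x ^+ s) = if c == 0 then (#|K|)%:R else 0.
Proof. by rewrite -(sum_psi_mul c) [RHS](reindex_inj pow_inj). Qed.

Lemma sum_psi_pow_nz (c : K) :
  \sum_(a : K | a != 0) psi p (a ^+ s * c) = (if c == 0 then (#|K|)%:R else 0) - 1.
Proof.
rewrite -(sum_psi_pow c) [in RHS](bigD1 0) //= expr0n eqn0Ngt s_gt0 mulr0 psi0 (addrC 1) addrK.
by apply: eq_bigr => u _; rewrite mulrC.
Qed.

Local Notation P x := (psi p (x ^+ s)).
Local Notation q := ((#|K|)%:R : algC).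

Lemma P0 : P (0 : K) = 1.
Proof. by rewrite expr0n eqn0Ngt s_gt0 psi0. Qed.

Lemma sumP : \sum_(x : K) P x = 0.
Proof. by have := sum_psi_pow 1; under eq_bigr => x _ do rewrite mul1r; rewrite oner_eq0. Qed.

Lemma Wfact (t u : K) : W p s (t * u) = \sum_(x : K) P x * psi p (u * - (t * x)).
Proof. by apply: eq_bigr => x _; rewrite -psi_add; congr (psi p _); ring. Qed.

Lemma Wfact1 (u : K) : W p s u = \sum_(x : K) P x * psi p (u * - x).
Proof. by apply: eq_bigr => x _; rewrite -psi_add; congr (psi p _); ring. Qed.

Lemma mul_sums (T1 T2 : finType) (f1 : T1 -> algC) (g1 : T1 -> K)
   (f2 : T2 -> algC) (g2 : T2 -> K) (u : K) :
  (\sum_(z : T1) f1 z * psi p (u * g1 z)) * (\sum_(w : T2) f2 w * psi p (u * g2 w))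
  = \sum_(zw : T1 * T2) (f1 zw.1 * f2 zw.2) * psi p (u * (g1 zw.1 + g2 zw.2)).
Proof.
rewrite big_distrlr pair_bigA /=; apply: eq_bigr => zw _.
by rewrite mulrDr psi_add; ring.
Qed.

Lemma pair_sum (T1 T2 : finType) (F : T1 -> T2 -> algC) :
  \sum_(z : T1 * T2) F z.1 z.2 = \sum_(x : T1) \sum_(y : T2) F x y.
Proof. by rewrite pair_bigA. Qed.

Lemma sum_pick (F : K -> algC) (y0 : K) :
  \sum_(y : K) (if y == y0 then F y else 0) = F y0.
Proof. by rewrite -big_mkcond big_pred1_eq. Qed.

Lemma solve_y (a b t y : K) : t != 0 -> (a + t * y == b) = (y == (b - a) / t).
Proof. by move=> t0; apply/eqP/eqP => [<-|->]; field. Qed.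

Lemma Tzero (t1 t2 : K) : t1 != 0 -> t2 != 0 ->
  \sum_(x : K) P x * P ((0 - t1 * x) / t2) = if t1 == t2 then q else 0.
Proof.
move=> t10 t20; set c := - t1 / t2.
have -> : (t1 == t2) = (1 + c ^+ s == 0).
  rewrite addrC addr_eq0 -neg1s (inj_eq pow_inj) /c mulNr eqr_opp.
  by apply/eqP/eqP => [->|h]; [rewrite divff | rewrite -[t1](divfK t20) h mul1r].
rewrite -sum_psi_pow; apply: eq_bigr => x _.
rewrite -psi_add; congr (psi p _).
have -> : (0 - t1 * x) / t2 = c * x by rewrite /c; field.
by rewrite exprMn; ring.
Qed.

Lemma part1 : \sum_(u : K | u != 0) W p s u = q.
Proof.
under eq_bigr => u _ do rewrite Wfact1.
rewrite (orth (fun x => P x) (fun x => - x)) sumP subr0.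
rewrite (eq_bigl (fun x => x == 0)) => [|x]; last by rewrite oppr_eq0.
by rewrite big_pred1_eq P0 mulr1.
Qed.

Lemma part2 (t1 t2 : K) : t1 != 0 -> t2 != 0 ->
  \sum_(u : K | u != 0) W p s (t1 * u) * W p s (t2 * u)
   = (if t1 == t2 then (#|K| ^ 2)%:R else 0).
Proof.
move=> t10 t20.
under eq_bigr => u _ do rewrite !Wfact mul_sums.
rewrite (orth (fun z : K * K => P z.1 * P z.2) (fun z => - (t1 * z.1) + - (t2 * z.2))).
have -> : \sum_(z : K * K) P z.1 * P z.2 = 0.
  by rewrite (pair_sum (fun x y => P x * P y)) -big_distrlr /= sumP mul0r.
rewrite subr0 big_mkcond /= (pair_sum (fun x y => if - (t1 * x) + - (t2 * y) == 0 then P x * P y else 0)).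
under eq_bigr => x _.
  under eq_bigr => y _ do rewrite -opprD oppr_eq0 (solve_y _ _ _ t20).
  rewrite sum_pick; over.
by rewrite Tzero //; case: eqP; rewrite ?mulr0 // natrX expr2.
Qed.

Lemma Qcount (t1 t2 b : K) : t2 != 0 ->
  ((Q s si t1 t2 1 b)%:R : algC)
  = \sum_(v : K) ((v ^+ s + ((1 - t1 * v) / t2) ^+ s) ^+ si == b)%:R.
Proof.
move=> t20; rewrite /Q -sum1_card natr_sum big_mkcond /=.
under eq_bigr => z _ do rewrite inE.
rewrite (pair_sum (fun x y => if (t1 * x + t2 * y == 1)
                      && ((x ^+ s + y ^+ s) ^+ si == b) then 1%:R else 0)).
apply: eq_bigr => v _.
rewrite -(sum_pick (fun w => ((v ^+ s + w ^+ s) ^+ si == b)%:R) ((1 - t1 * v) / t2)).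
apply: eq_bigr => w _; rewrite /= (solve_y _ _ _ t20).
by case: eqP => // _; case: eqP.
Qed.

Lemma powi_eq (X b : K) : (X ^+ si == b) = (X == b ^+ s).
Proof. by apply/eqP/eqP => [<-|->]; rewrite ?powK ?powK'. Qed.

Lemma pow_eq (x y : K) : (x ^+ s == y ^+ s) = (x == y).
Proof. by apply/eqP/eqP => [/pow_inj|->]. Qed.

Lemma Q0count (t1 t2 : K) : t2 != 0 ->
  ((Q s si t1 t2 1 0)%:R : algC) = if t1 == t2 then 0 else 1.
Proof.
move=> t20; rewrite Qcount //.
under eq_bigr => v _.
  rewrite powi_eq expr0n eqn0Ngt s_gt0 /= addr_eq0 -powN pow_eq.
  have -> : (v == - ((1 - t1 * v) / t2)) = (t2 * v == t1 * v - 1).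
    apply/eqP/eqP => h; first by rewrite {1}h; field.
    by apply: (mulfI t20); rewrite h; field.
  have -> : (t2 * v == t1 * v - 1) = ((t1 - t2) * v == 1).
    by apply/eqP/eqP => h; [rewrite mulrBl h; ring | rewrite -h; ring].
  over.
have [->|ne] := eqVneq t1 t2.
  by apply: big1 => v _; rewrite subrr mul0r eq_sym oner_eq0.
have d0 : t1 - t2 != 0 by rewrite subr_eq0.
transitivity (\sum_(v : K) (if v == (t1 - t2)^-1 then (1 : algC) else 0)); last first.
  exact: (sum_pick (fun _ => 1)).
apply: eq_bigr => v _.
have -> : ((t1 - t2) * v == 1) = (v == (t1 - t2)^-1).
  by apply/eqP/eqP => [h|->]; [apply: (mulfI d0); rewrite h divff | rewrite divff].
by case: eqP.
Qed.

Lemma sum_const1 : \sum_(v : K) (1 : algC) = q.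
Proof. by rewrite sumr_const cardE. Qed.

Lemma S3 (t1 t2 t3 : K) : t1 != 0 -> t2 != 0 -> t3 != 0 ->
  \sum_(x : K) \sum_(y : K) P x * P y * P ((0 - (- (t1 * x) + - (t2 * y))) / - t3)
  = q * V s si t1 t2 t3^-1.
Proof.
move=> t10 t20 t30.
have nt3 : - t3 != 0 by rewrite oppr_eq0.
have inj x : injective (fun a : K => (a - t1 * x) / t2).
  move=> a b /= h; have := f_equal (fun y => y * t2 + t1 * x) h.
  by rewrite /= !divfK // !subrK.
under eq_bigr => x _.
  rewrite (reindex_inj (inj x)) /=.
  under eq_bigr => a _.
    have -> : (0 - (- (t1 * x) + - (t2 * ((a - t1 * x) / t2)))) / - t3 = - (a / t3).
      by field; rewrite t30 nt3 t20.
    over.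
  over.
rewrite exchange_big /= (bigD1 0) //=.
under eq_bigr => x _ do rewrite mul0r oppr0 P0 mulr1.
rewrite Tzero //.
pose h v := v ^+ s + ((1 - t1 * v) / t2) ^+ s - t3^-1 ^+ s.
under eq_bigr => a a0.
  rewrite (reindex_inj (mulfI a0)) /=.
  under eq_bigr => v _.
    have -> : P (a * v) * P ((a - t1 * (a * v)) / t2) * P (- (a / t3)) = psi p (a ^+ s * h v).
      rewrite -!psi_add; congr (psi p _).
      have -> : (a - t1 * (a * v)) / t2 = a * ((1 - t1 * v) / t2) by field.
      by rewrite /h powN !exprMn; ring.
    over.
  over.
rewrite exchange_big /=.
under eq_bigr => v _ do rewrite sum_psi_pow_nz.
rewrite /V Qcount // Q0count //.
under [X in _ = _ * (X - _)]eq_bigr => v _ do rewrite powi_eq -subr_eq0 -/(h v).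
rewrite sumrB sum_const1.
have -> : \sum_(i : K) (if h i == 0 then q else 0) = q * \sum_(i : K) (h i == 0)%:R.
  by rewrite mulr_sumr; apply: eq_bigr => v _; case: eqP; rewrite ?mulr0 ?mulr1.
by case: eqP => _ /=; ring.
Qed.

Lemma part3 (t1 t2 t3 : K) : t1 != 0 -> t2 != 0 -> t3 != 0 ->
  \sum_(u : K | u != 0) W p s (t1 * u) * W p s (t2 * u) * W p s (t3 * u)
   = (#|K| ^ 2)%:R * V s si t1 t2 t3^-1.
Proof.
move=> t10 t20 t30.
have nt3 : - t3 != 0 by rewrite oppr_eq0.
under eq_bigr => u _ do rewrite !Wfact mul_sums mul_sums.
rewrite (orth (fun z : (K * K) * K => P z.1.1 * P z.1.2 * P z.2)
   (fun z => - (t1 * z.1.1) + - (t2 * z.1.2) + - (t3 * z.2))).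
have -> : \sum_(z : (K * K) * K) P z.1.1 * P z.1.2 * P z.2 = 0.
  by rewrite (pair_sum (fun xy w => P xy.1 * P xy.2 * P w)) -big_distrlr /= sumP mulr0.
rewrite subr0 big_mkcond /=.
rewrite (pair_sum (fun xy w => if - (t1 * xy.1) + - (t2 * xy.2) + - (t3 * w) == 0
                               then P xy.1 * P xy.2 * P w else 0)).
under eq_bigr => xy _.
  under eq_bigr => w _ do rewrite -[- (t3 * w)]mulNr (solve_y _ _ _ nt3).
  rewrite (sum_pick (fun w => P xy.1 * P xy.2 * P w)); over.
rewrite (pair_sum (fun x y => P x * P y * P ((0 - (- (t1 * x) + - (t2 * y))) / - t3))).
by rewrite S3 // mulrA natrX expr2.
Qed.

Lemma ifq (b : bool) : (if b then q else 0) = q * b%:R.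
Proof. by case: b; rewrite ?mulr1 ?mulr0. Qed.

Lemma sum_eqeq (A B : K) : A != 0 ->
  \sum_(u : K | u != 0) (A == u)%:R * (B == u)%:R = (B == A)%:R :> algC.
Proof.
move=> A0; rewrite (bigD1 A) //= eqxx mul1r big1 ?addr0 //.
by move=> u /andP [_ uA]; rewrite eq_sym (negbTE uA) mul0r.
Qed.

Lemma powi_eq2 (x y : K) : (x ^+ si == y ^+ si) = (x == y).
Proof. by apply/eqP/eqP => [/powi_inj|->]. Qed.

Lemma S4 :
  \sum_(x : K) \sum_(y : K) \sum_(z : K)
     P x * P y * P z * P ((0 - (- x + - y + - z)) / -1)
  = q * \sum_(u : K | u != 0) V s si 1 1 u ^+ 2.
Proof.
have n1 : (-1 : K) != 0 by rewrite oppr_eq0 oner_eq0.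
pose F a := \sum_(x : K) P x * P (a - x).
pose k (v : K) := v ^+ s + (1 - v) ^+ s.
have E1 : \sum_(x : K) \sum_(y : K) \sum_(z : K)
     P x * P y * P z * P ((0 - (- x + - y + - z)) / -1)
   = \sum_(a : K) F a * F (- a).
  transitivity (\sum_(x : K) \sum_(a : K) P x * P (a - x) * F (- a)).
    apply: eq_bigr => x _; rewrite (reindex_inj (addIr (- x))) /=.
    apply: eq_bigr => a _; rewrite /F; symmetry; rewrite mulr_sumr; apply: eq_bigr => z _.
    have -> : (0 - (- x + - (a - x) + - z)) / -1 = - a - z by field.
    by rewrite !mulrA.
  by rewrite exchange_big /=; apply: eq_bigr => a _; rewrite -mulr_suml.
have F0 : F 0 = q.
  rewrite /F -sum_const1; apply: eq_bigr => x _.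
  by rewrite sub0r powN -psi_add subrr psi0.
have Fa a : a != 0 -> F a = \sum_(v : K) psi p (a ^+ s * k v).
  move=> a0; rewrite /F (reindex_inj (mulfI a0)) /=; apply: eq_bigr => v _.
  rewrite -psi_add; congr (psi p _).
  have -> : a - a * v = a * (1 - v) by ring.
  by rewrite /k !exprMn; ring.
have Fna a : a != 0 -> F (- a) = \sum_(w : K) psi p (a ^+ s * - k w).
  move=> a0; have na0 : - a != 0 by rewrite oppr_eq0.
  rewrite /F (reindex_inj (mulfI na0)) /=; apply: eq_bigr => v _.
  rewrite -psi_add; congr (psi p _).
  have -> : - a - - a * v = - (a * (1 - v)) by ring.
  by rewrite /k mulNr !powN !exprMn; ring.
rewrite E1 (bigD1 0) //= oppr0 F0.
under eq_bigr => a a0.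
  rewrite Fa // Fna // big_distrlr /=.
  under eq_bigr => v _ do under eq_bigr => w _ do rewrite -psi_add -mulrDr.
  over.
rewrite exchange_big /=.
under eq_bigr => v _ do rewrite exchange_big /=.
under eq_bigr => v _ do under eq_bigr => w _ do rewrite sum_psi_pow_nz ifq subr_eq0.
under [X in _ = _ * X]eq_bigr => u _.
  have -> : V s si 1 1 u = \sum_(v : K) (k v ^+ si == u)%:R.
    rewrite /V Qcount ?oner_neq0 // Q0count ?oner_neq0 // eqxx subr0.
    by apply: eq_bigr => v _; rewrite mul1r divr1.
  rewrite expr2 big_distrlr /=.
  over.
rewrite [X in _ = _ * X]exchange_big /=.
under [X in _ = _ * X]eq_bigr => v _ do rewrite exchange_big /=.
have k0 v : k v ^+ si != 0.
  rewrite expf_eq0 si_gt0 /= /k addr_eq0 -powN pow_eq.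
  apply/eqP => h; have : (1 : K) == 0 by rewrite -(subrr v) {2}h; apply/eqP; ring.
  by rewrite oner_eq0.
under [X in _ = _ * X]eq_bigr => v _ do under eq_bigr => w _ do rewrite sum_eqeq // powi_eq2.
have sq : \sum_(v : K) q = q * q.
  by rewrite -[X in _ = _ * X]sum_const1 mulr_sumr; apply: eq_bigr => v _; rewrite mulr1.
under eq_bigr => v _ do rewrite sumrB sum_const1 -mulr_sumr.
rewrite sumrB -mulr_sumr sq addrC subrK.
congr (_ * _); apply: eq_bigr => v _; apply: eq_bigr => w _; by rewrite eq_sym.
Qed.
Lemma part4 :
  \sum_(u : K | u != 0) W p s u ^+ 4
   = (#|K| ^ 2)%:R * \sum_(u : K | u != 0) V s si 1 1 u ^+ 2.
Proof.
have n1 : (-1 : K) != 0 by rewrite oppr_eq0 oner_eq0.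
under eq_bigr => u _ do rewrite !exprS expr0 mulr1 !mulrA !Wfact1 !mul_sums.
rewrite (orth (fun z : ((K * K) * K) * K => P z.1.1.1 * P z.1.1.2 * P z.1.2 * P z.2)
   (fun z => - z.1.1.1 + - z.1.1.2 + - z.1.2 + - z.2)).
have -> : \sum_(z : ((K * K) * K) * K) P z.1.1.1 * P z.1.1.2 * P z.1.2 * P z.2 = 0.
  by rewrite (pair_sum (fun xyz w => P xyz.1.1 * P xyz.1.2 * P xyz.2 * P w)) -big_distrlr /= sumP mulr0.
rewrite subr0 big_mkcond /=.
rewrite (pair_sum (fun xyz w => if - xyz.1.1 + - xyz.1.2 + - xyz.2 + - w == 0
                               then P xyz.1.1 * P xyz.1.2 * P xyz.2 * P w else 0)).
under [X in _ * X = _]eq_bigr => xyz _.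
  under eq_bigr => w _ do rewrite -[- w]mulN1r (solve_y _ _ _ n1).
  rewrite (sum_pick (fun w => P xyz.1.1 * P xyz.1.2 * P xyz.2 * P w)); over.
rewrite (pair_sum (fun xy z => P xy.1 * P xy.2 * P z * P ((0 - (- xy.1 + - xy.2 + - z)) / -1))).
rewrite (pair_sum (fun x y => \sum_(z : K) P x * P y * P z * P ((0 - (- x + - y + - z)) / -1))).
by rewrite S4 // mulrA natrX expr2.
Qed.

End Field.

Unset Implicit Arguments.
Set Strict Implicit.

Theorem lemma5p14 (K : finFieldType) (p s si : nat) (t1 t2 t3 : K) :
  p \in [pchar K] ->
  (0 < s)%N -> coprime s (#|K|.-1) ->
  (0 < si)%N -> (s * si = 1 %[mod #|K|.-1])%N ->
  t1 != 0 -> t2 != 0 -> t3 != 0 ->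
  [/\ \sum_(u : K | u != 0) W p s u = (#|K|)%:R,
      \sum_(u : K | u != 0) W p s (t1 * u) * W p s (t2 * u)
        = (if t1 == t2 then (#|K| ^ 2)%:R else 0),
      \sum_(u : K | u != 0) W p s (t1 * u) * W p s (t2 * u) * W p s (t3 * u)
        = (#|K| ^ 2)%:R * V s si t1 t2 t3^-1
    & \sum_(u : K | u != 0) W p s u ^+ 4
        = (#|K| ^ 2)%:R * \sum_(u : K | u != 0) V s si 1 1 u ^+ 2].
Proof.
move=> pK s0 _ si0 ssi t10 t20 t30; split.
- exact: (part1 pK s0 si0 ssi).
- exact: (part2 pK s0 si0 ssi).
- exact: (part3 pK s0 si0 ssi).
- exact: (part4 pK s0 si0 ssi).
Qed.
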